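(* In the setting below, let $i\in\{1,\dots,\overline M\}$ with $\overline S_i=S_a\times\{b\}$ and put $\overline\tau^\varepsilon_i:=\tau^\varepsilon_{ab}$. For every bounded continuous $f:[0,\infty)\to\mathbb R$, $$\lim_{\varepsilon\downarrow0}\Big(\mathbb E f\Big(\frac{\overline T^\varepsilon(\bar x_1,\overline S_{j_1})}{\overline\tau^\varepsilon_i}\Big)-\mathbb E f\Big(\frac{\overline T^\varepsilon(\bar x_2,\overline S_{j_2})}{\overline\tau^\varepsilon_i}\Big)\Big)=0$$ uniformly in $\bar x_1,\bar x_2\in\overline S_i$ and $j_1,j_2\in\{1,\dots,\overline M\}$ with $\overline P^\varepsilon_{ij_1},\overline P^\varepsilon_{ij_2}>0$.
   Context: $S$ is a metric space partitioned into disjoint Borel sets $S_1,\dots,S_M$; for $\varepsilon>0$, $Q^\varepsilon$ is a Markov kernel from $S$ to $S\times[0,\infty)$, $P^\varepsilon(x,B)=Q^\varepsilon(x,B\times[0,\infty))$, and for $P^\varepsilon(x,B)>0$, $T^\varepsilon(x,B)$ has law $\mathbb P(T^\varepsilon(x,B)\le t)=Q^\varepsilon(x,B\times[0,t])/P^\varepsilon(x,B)$. Assumptions: $P^\varepsilon(x,S_i)=0$ for $x\in S_i$; for $i\ne j$, either $P^\varepsilon(x,S_j)=0$ for all $x\in S_i,\varepsilon$ (set $P^\varepsilon_{ij}\equiv0$) or it is positive for all $x\in S_i,\varepsilon$ and there are positive $P^\varepsilon_{ij}$ with $P^\varepsilon(x,S_j)/P^\varepsilon_{ij}\to1$ uniformly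 in $x\in S_i$; for $P^\varepsilon_{ij}\not\equiv0$ there are positive $\tau^\varepsilon_{ij}$ with $\mathbb ET^\varepsilon(x,S_j)/\tau^\varepsilon_{ij}\to1$ uniformly in $x\in S_i$; for every bounded continuous $f$ and $P^\varepsilon_{ij}\not\equiv0$, $\mathbb E f(T^\varepsilon(x_1,S_j)/\tau^\varepsilon_{ij})-\mathbb E f(T^\varepsilon(x_2,S_j)/\tau^\varepsilon_{ij})\to0$ uniformly in $x_1,x_2\in S_i$. Extended process: $\overline S=\{(x,j):x\in S_i,\ P^\varepsilon_{ij}\not\equiv0\}$ with kernel $\overline Q^\varepsilon((x,j),(A\times\{k\})\times I)=\frac{1}{P^\varepsilon(x,S_j)}\int_{A\cap S_j}P^\varepsilon(y,S_k)Q^\varepsilon(x,dy\times I)$; $\overline S$ is partitioned into sets $S_a\times\{b\}$ with $P^\varepsilon_{ab}\not\equiv0$, re-indexed $\overline S_1,\dots,\overline S_{\overline M}$; $\overline P^\varepsilon(\bar x,B)=\overline Q^\varepsilon(\bar x,B\times[0,\infty))$; $\overline T^\varepsilon(\bar x,B)$ has law $\overline Q^\varepsilon(\bar x,B\times\cdot)/\overline P^\varepsilon(\bar x,B)$. If $\overline S_i=S_a\times\{b\}$, $\overline S_j=S_c\times\{d\}$, then $\overline P^\varepsilon_{ij}=P^\varepsilon_{cd}$ if $b=c$ and $\equiv0$ otherwise. *)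

(* Defs.v *)
From HB Require Import structures.
From mathcomp Require Import all_boot all_order all_algebra.
From mathcomp Require Import all_classical all_reals all_analysis.
Set Implicit Arguments. Unset Strict Implicit. Unset Printing Implicit Defensive.
Import Order.TTheory GRing.Theory Num.Theory.
Import numFieldNormedType.Exports.
Local Open Scope classical_set_scope.
Local Open Scope ring_scope.

Notation borel T := (g_sigma_algebraType (@open T)).

Definition Rnn {R : realType} : set R := [set t : R | 0 <= t].

Section Defs.
Context {R : realType} {d : measure_display} {X : measurableType d}.

(* Q : a kernel from X to X * R (the time component lives in [0,oo)). *)
Variable Q : X -> {measure set (X * R)%type -> \bar R}.

Definition Pk (x : X) (B : set X) : R := fine (Q x (B `*` Rnn)).

(* E g(T(x,B)), where T(x,B) has law Q(x, B x .)/P(x,B) on [0,oo):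
   E g(T(x,B)) = (1/P(x,B)) \int_{B x [0,oo)} g(t) Q(x, d(y,t)). *)
Definition ET (x : X) (B : set X) (g : R -> R) : R :=
  fine (\int[Q x]_(z in B `*` Rnn) (g z.2)%:E) / Pk x B.

Definition EmeanT (x : X) (B : set X) : \bar R :=
  ((Pk x B)^-1)%:E * \int[Q x]_(z in B `*` Rnn) (z.2)%:E.

(* For the extended state (x,b) (x in S_b's predecessor
   class, current "target" b) and the target set  A x {k}  with time set I:
   Qbar((x,b),(A x {k}) x I)
     = (1/P(x,S_b)) \int_{(A /\ S_b) x I} P(y,S_k) Q(x, d(y,t)). *)
Definition Qbar (x : X) (Sb : set X) (A : set X) (Sk : set X) (I : set R) : R :=
  (Pk x Sb)^-1 * fine (\int[Q x]_(z in (A `&` Sb) `*` I) (Pk z.1 Sk)%:E).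

Definition Pbar (x : X) (Sb A Sk : set X) : R :=
  Qbar x Sb A Sk Rnn.

(* E g(Tbar((x,b), A x {k})) where Tbar has law Qbar((x,b),(A x {k}) x .) /
   Pbar((x,b), A x {k}); i.e. the integral of g against the measure
   I |-> Qbar(...I...), which has density y |-> P(y,S_k)/P(x,S_b)
   with respect to Q(x,.) restricted to (A /\ S_b) x [0,oo). *)
Definition ETbar (x : X) (Sb A Sk : set X) (g : R -> R) : R :=
  (Pk x Sb)^-1 *
  fine (\int[Q x]_(z in (A `&` Sb) `*` Rnn)
          (Pk z.1 Sk * g z.2)%:E) / Pbar x Sb A Sk.

End Defs.

Definition unif_cvg0 {R : realType} {U : Type} (D : set U)
  (F : R -> U -> R) (l : R) : Prop :=
  forall delta : R, 0 < delta -> exists eps0 : R, 0 < eps0 /\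
    forall eps : R, 0 < eps -> eps < eps0 ->
      forall u, D u -> `|F eps u - l| < delta.

(* E T(x,B)/tau -> 1 uniformly in x in D as eps -> 0+ (in extended reals,
   so that E T = +oo is excluded eventually) *)
Definition unif_cvg0_mean {R : realType} {U : Type} (D : set U)
  (F : R -> U -> \bar R) (tau : R -> R) : Prop :=
  forall delta : R, 0 < delta -> exists eps0 : R, 0 < eps0 /\
    forall eps : R, 0 < eps -> eps < eps0 ->
      forall u, D u -> (`|F eps u * ((tau eps)^-1)%:E - 1| < delta%:E)%E.

Definition Pnz {R : realType} {M : nat} (Pij : R -> 'I_M -> 'I_M -> R)
  (i j : 'I_M) : Prop := ~ (forall eps : R, 0 < eps -> Pij eps i j = 0).

(* Pbar^eps_{ij} for Sbar_i = S_a x {b}, Sbar_j = S_c x {d} *)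
Definition Pbarij {R : realType} {M : nat} (Pij : R -> 'I_M -> 'I_M -> R)
  (eps : R) (i j : 'I_M * 'I_M) : R :=
  if i.2 == j.1 then Pij eps j.1 j.2 else 0.

Definition bdd_cont_nonneg {R : realType} (f : R -> R) : Prop :=
  {within Rnn, continuous f} /\ exists C : R, forall t, Rnn t -> `|f t| <= C.

(* Main.v *)
Require Import Defs.
From HB Require Import structures.
From mathcomp Require Import all_boot all_order all_algebra.
From mathcomp Require Import all_classical all_reals all_analysis.
From mathcomp Require Import ring lra measurable_realfun.
Import Order.TTheory GRing.Theory Num.Theory.
Import numFieldNormedType.Exports.
Local Open Scope classical_set_scope.
Local Open Scope ring_scope.

Section Key.
Context d (T : measurableType d) (R : realType) (mu : {measure set T -> \bar R}).

Lemma int_bdd {A : set T} {g : T -> R} {C : R} : measurable A -> (mu A < +oo)%E ->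
  measurable_fun A g -> (forall z, A z -> `|g z| <= C) ->
  mu.-integrable A (EFin \o g).
Proof.
move=> mA muA mg hg; apply: measurable_bounded_integrable => //.
exists C; split; first exact: num_real.
move=> M hM x Ax /=; rewrite (le_trans (hg x Ax))// ltW//.
Qed.

Lemma key (A : set T) (h g : T -> R) (C eta : R) :
  measurable A -> (mu A < +oo)%E -> 0 < fine (mu A) ->
  measurable_fun A h -> measurable_fun A g ->
  (forall z, A z -> `|g z| <= C) -> 0 <= eta -> eta <= 1/2 ->
  (forall z, A z -> `|h z - 1| <= eta) ->
  `| Rintegral mu A (fun z => h z * g z) / Rintegral mu A h
     - Rintegral mu A g / fine (mu A)| <= 4 * eta * C.
Proof.
move=> mA muA m0 mh mg hg e0 e1 hh.
set m := fine (mu A).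
have C0 : 0 <= C.
  have [z Az] : A !=set0.
    apply/set0P/negP => /eqP A0; move: m0; rewrite /m A0 measure0 /= ltxx //.
  exact: le_trans (hg z Az).
have hb : forall z, A z -> `|h z| <= 1 + eta.
  move=> z Az; have := hh z Az => H.
  rewrite -[h z](subrK 1) (le_trans (ler_normD _ _))// normr1 addrC lerD2l //.
have ih := int_bdd mA muA mh hb.
have ig := int_bdd mA muA mg hg.
have mhg : measurable_fun A (fun z => h z * g z) by exact: measurable_funM.
have ihg : mu.-integrable A (EFin \o (fun z => h z * g z)).
  apply: (int_bdd (C := (1 + eta) * C)) => // z Az.
  by rewrite normrM; apply: ler_pM => //; [exact: hb | exact: hg].
have i1 : mu.-integrable A (EFin \o (fun=> (1:R))).
  by apply: (int_bdd (C := 1)) => // z _; rewrite normr1.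
have icst : forall c : R, mu.-integrable A (EFin \o (fun=> c)).
  by move=> c; apply: (int_bdd (C := `|c|)) => //.
set I1 := Rintegral mu A (fun z => h z * g z).
set I2 := Rintegral mu A h.
set I3 := Rintegral mu A g.
have ihg1 : mu.-integrable A (EFin \o (fun z => h z * g z - g z)).
  by apply: (integrableB _ ihg ig).
have hu : `|I1 - I3| <= eta * C * m.
  rewrite /I1 /I3 -RintegralB //.
  rewrite (le_trans (le_normr_Rintegral _ _)) //.
  rewrite -Rintegral_cst //; apply: le_Rintegral => //.
    exact: integrable_norm.
  move=> z Az /=; rewrite -{2}(mul1r (g z)) -mulrBl normrM; apply: ler_pM => //.
  by rewrite hh.
  by rewrite hg.
have ih1 : mu.-integrable A (EFin \o (fun z => h z - 1)).
  by apply: (integrableB _ ih i1).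
have hv : `|I2 - m| <= eta * m.
  rewrite {1}(_ : m = Rintegral mu A (fun _ => 1)); last by rewrite Rintegral_cst // mul1r.
  rewrite /I2 -RintegralB //.
  rewrite (le_trans (le_normr_Rintegral _ _)) //.
  rewrite -Rintegral_cst //; apply: le_Rintegral => //.
    exact: integrable_norm.
have hw : `|I3| <= C * m.
  rewrite /I3 /m (le_trans (le_normr_Rintegral _ _)) //.
  rewrite -Rintegral_cst //; apply: le_Rintegral => //.
    exact: integrable_norm.
have em : eta * m <= 1 / 2 * m by rewrite ler_pM2r.
have I2p : m / 2 <= I2.
  move: hv; rewrite ler_norml => /andP[hv1 _]; lra.
have I2pos : 0 < I2 by have mp : 0 < m by []; lra.
have -> : I1 / I2 - I3 / m = ((I1 - I3) * m - I3 * (I2 - m)) / (I2 * m).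
  by field; apply/andP; split; rewrite gt_eqF.
have mp : 0 < m by []. rewrite normrM normfV [`|I2 * m|]gtr0_norm ?mulr_gt0 // ler_pdivrMr ?mulr_gt0 //.
have eC : 0 <= eta * C by rewrite mulr_ge0.
have h1 : `|(I1 - I3) * m - I3 * (I2 - m)| <= eta * C * m * m + C * m * (eta * m).
  rewrite (le_trans (ler_normB _ _)) // lerD //.
    by rewrite normrM (gtr0_norm m0) ler_pM2r.
  by rewrite normrM ler_pM.
apply: (le_trans h1).
have h2 : eta * C * m * m + C * m * (eta * m) = (eta * C) * (2 * m * m) by ring.
rewrite h2.
have h3 : 4 * eta * C * (I2 * m) = (eta * C) * (4 * I2 * m) by ring.
rewrite h3; apply: ler_wpM2l => //.
by rewrite ler_pM2r //; lra.
Qed.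

Lemma key2 (A : set T) (h g : T -> R) (C eta p : R) :
  measurable A -> (mu A < +oo)%E -> 0 < fine (mu A) ->
  measurable_fun A h -> measurable_fun A g ->
  (forall z, A z -> `|g z| <= C) -> 0 <= eta -> eta <= 1/2 -> 0 < p ->
  (forall z, A z -> `|h z / p - 1| <= eta) ->
  `| Rintegral mu A (fun z => h z * g z) / Rintegral mu A h
     - Rintegral mu A g / fine (mu A)| <= 4 * eta * C.
Proof.
move=> mA muA m0 mh mg hg e0 e1 p0 hh.
have mhn : measurable_fun A (fun z => h z / p).
  exact: measurable_funM.
have K := @key A (fun z => h z / p) g C eta mA muA m0 mhn mg hg e0 e1 hh.
have hb : forall z, A z -> `|h z| <= p * (1 + eta).
  move=> z Az; have -> : h z = p * (h z / p) by field; rewrite gt_eqF.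
  rewrite normrM (gtr0_norm p0) ler_pM2l //.
  rewrite -[h z / p](subrK 1) (le_trans (ler_normD _ _))// normr1 addrC lerD2l.
  exact: hh.
have ih := int_bdd mA muA mh hb.
have mhg : measurable_fun A (fun z => h z * g z) by exact: measurable_funM.
have ihg : mu.-integrable A (EFin \o (fun z => h z * g z)).
  apply: (int_bdd (C := p * (1 + eta) * C)) => // z Az.
  rewrite normrM; apply: ler_pM => //; [exact: hb | exact: hg].
have E1 : Rintegral mu A (fun z => h z / p * g z) = p^-1 * Rintegral mu A (fun z => h z * g z).
  rewrite -RintegralZl //; apply: eq_Rintegral => z _; rewrite mulrAC mulrC mulrA //.
have E2 : Rintegral mu A (fun z => h z / p) = p^-1 * Rintegral mu A h.
  rewrite -RintegralZl //; apply: eq_Rintegral => z _; rewrite mulrC //.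
move: K; rewrite E1 E2.
suff -> : p^-1 * Rintegral mu A (fun z => h z * g z) / (p^-1 * Rintegral mu A h)
  = Rintegral mu A (fun z => h z * g z) / Rintegral mu A h by [].
by rewrite invfM mulrACA mulfV ?mul1r // invr_eq0 gt_eqF.
Qed.
End Key.

Lemma near0_fin (R : realType) (M : nat) (P : 'I_M -> R -> Prop) :
  (forall d, exists e : R, 0 < e /\ forall eps, 0 < eps -> eps < e -> P d eps) ->
  exists e : R, 0 < e /\ forall eps, 0 < eps -> eps < e -> forall d, P d eps.
Proof.
move=> H.
suff : forall s : seq 'I_M, exists e : R, 0 < e /\
    forall eps, 0 < eps -> eps < e -> forall d, d \in s -> P d eps.
  move=> /(_ (enum 'I_M)) [e [e0 He]]; exists e; split => // eps ? ? d.
  by apply: He => //; rewrite mem_enum.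
elim => [|d0 s [e [e0 He]]].
  by exists 1; split => // eps _ _ d; rewrite in_nil.
have [e1 [e10 He1]] := H d0.
exists (Num.min e e1); split; first by rewrite lt_min e0 e10.
move=> eps ep; rewrite lt_min => /andP[h1 h2] d; rewrite in_cons => /orP[/eqP ->|ds].
  exact: He1.
exact: He.
Qed.

Theorem corollary4p3
  (R : realType) (S : pseudoPMetricType R) (hS : hausdorff_space S)
  (M : nat) (Sp : 'I_M -> set (borel S))
  (hSm : forall i, measurable (Sp i))
  (hcover : forall x, exists i, Sp i x)
  (hdisj : forall i j x, Sp i x -> Sp j x -> i = j)
  (Q : R -> R.-pker (borel S) ~> (borel S * R)%type)
  (hQsupp : forall eps x, 0 < eps -> Q eps x (setT `*` [set t | t < 0]) = 0%E)
  (Pij tau : R -> 'I_M -> 'I_M -> R)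
  (hdiag : forall eps i x, 0 < eps -> Sp i x -> Pk (Q eps) x (Sp i) = 0)
  (hPii : forall eps i, Pij eps i i = 0)
  (hdich : forall i j, i != j ->
     (forall eps, 0 < eps ->
        Pij eps i j = 0 /\ forall x, Sp i x -> Pk (Q eps) x (Sp j) = 0)
     \/ ((forall eps, 0 < eps ->
           0 < Pij eps i j /\ forall x, Sp i x -> 0 < Pk (Q eps) x (Sp j))
         /\ unif_cvg0 (Sp i)
              (fun eps x => Pk (Q eps) x (Sp j) / Pij eps i j) 1))
  (htau : forall i j, Pnz Pij i j ->
     (forall eps, 0 < eps -> 0 < tau eps i j)
     /\ unif_cvg0_mean (Sp i) (fun eps x => EmeanT (Q eps) x (Sp j))
          (fun eps => tau eps i j))
  (hweak : forall i j, Pnz Pij i j -> forall f : R -> R, bdd_cont_nonneg f ->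
     unif_cvg0 (Sp i `*` Sp i)
       (fun eps u => ET (Q eps) u.1 (Sp j) (fun t => f (t / tau eps i j))
                   - ET (Q eps) u.2 (Sp j) (fun t => f (t / tau eps i j))) 0) :
  forall a b : 'I_M, Pnz Pij a b ->
  forall f : R -> R, bdd_cont_nonneg f ->
  forall delta : R, 0 < delta -> exists eps0 : R, 0 < eps0 /\
    forall eps : R, 0 < eps -> eps < eps0 ->
    forall x1 x2 : borel S, Sp a x1 -> Sp a x2 ->
    forall c1 d1 c2 d2 : 'I_M, Pnz Pij c1 d1 -> Pnz Pij c2 d2 ->
      0 < Pbarij Pij eps (a, b) (c1, d1) ->
      0 < Pbarij Pij eps (a, b) (c2, d2) ->
      `| ETbar (Q eps) x1 (Sp b) (Sp c1) (Sp d1) (fun t => f (t / tau eps a b))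
       - ETbar (Q eps) x2 (Sp b) (Sp c2) (Sp d2) (fun t => f (t / tau eps a b)) |
        < delta.
Proof.
Proof.
move=> a b hab f hf delta hdelta.
have ab : a != b.
  apply/eqP => eab; apply: hab => eps _; rewrite eab; exact: hPii.
have Hpos : forall eps, 0 < eps ->
    0 < Pij eps a b /\ forall x, Sp a x -> 0 < Pk (Q eps) x (Sp b).
  case: (hdich a b ab) => [H|[H _]] //.
  by exfalso; apply: hab => eps e0; case: (H eps e0).
have [hcont [C hC]] := hf.
have C0 : 0 <= C by apply: le_trans (hC 0 _); rewrite /Rnn /=.
pose eta := Num.min (1/2 : R) (delta / (12 * (C + 1))).
have C1 : 0 < C + 1 by lra.
have etap : 0 < eta by rewrite lt_min; apply/andP; split => //; rewrite divr_gt0 // mulr_gt0.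
have eta12 : eta <= 1/2 by rewrite ge_min lexx.
have etaC : eta * C <= delta / 12.
  have h1 : eta <= delta / (12 * (C + 1)) by rewrite ge_min lexx orbT.
  have h2 : eta * (C + 1) <= delta / 12.
    by rewrite -ler_pdivlMr // -mulrA -invfM.
  have h3 : 0 <= eta * 1 by rewrite mulr1 ltW.
  move: h2; rewrite mulrDr; lra.
have [e1 [e1p H1]] := hweak a b hab f hf (delta / 3) ltac:(by rewrite divr_gt0).
pose P := fun (dd : 'I_M) (eps : R) => 0 < Pij eps b dd ->
   forall y, Sp b y -> `|Pk (Q eps) y (Sp dd) / Pij eps b dd - 1| < eta.
have [e2 [e2p H2]] : exists e : R, 0 < e /\
    forall eps, 0 < eps -> eps < e -> forall dd, P dd eps.
  apply: near0_fin => dd.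
  have [/eqP bd|bd] := boolP (b == dd).
    by exists 1; split => // eps _ _; rewrite /P -bd hPii ltxx.
  case: (hdich b dd bd) => [H|[_ H]].
    by exists 1; split => // eps e0 _; rewrite /P (H eps e0).1 ltxx.
  have [e [e0 He]] := H eta etap.
  by exists e; split => // eps ep el _ y hy; exact: He.
have RnnE : Rnn = `[(0:R), +oo[%classic.
  by apply/seteqP; split => x; rewrite /Rnn /= in_itv /= andbT.
have mRnn : measurable (@Rnn R) by rewrite RnnE; exact: measurable_itv.
exists (Num.min e1 e2); split; first by rewrite lt_min e1p e2p.
move=> eps ep; rewrite lt_min => /andP[el1 el2] x1 x2 hx1 hx2 c1 d1 c2 d2 _ _ hP1 hP2.
have taup : 0 < tau eps a b by have [+ _] := htau a b hab; apply.
set g := fun t => f (t / tau eps a b).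
have side : forall x c dd, Sp a x -> 0 < Pbarij Pij eps (a, b) (c, dd) ->
    `|ETbar (Q eps) x (Sp b) (Sp c) (Sp dd) g - ET (Q eps) x (Sp b) g| <= 4 * eta * C.
  move=> x c dd hx; rewrite /Pbarij /=; case: eqP => [<-|]; last by rewrite ltxx.
  move=> hp.
  have mA : measurable (Sp b `*` Rnn) := measurableX (hSm b) mRnn.
  have muA : (Q eps x (Sp b `*` Rnn) < +oo)%E.
    rewrite (le_lt_trans (le_measure _ _ _ (subsetT (Sp b `*` Rnn)))) ?inE //.
    apply: (@le_lt_trans _ _ 1%E); last exact: ltry.
    by rewrite le_eqVlt; apply/orP; left; apply/eqP; exact: prob_kernel.
  have m0 : 0 < fine (Q eps x (Sp b `*` Rnn)) := (Hpos eps ep).2 x hx.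
  have mh : measurable_fun (Sp b `*` @Rnn R) (fun z => Pk (Q eps) z.1 (Sp dd)).
    apply: measurable_funTS.
    apply: (measurableT_comp (f := fun y => Pk (Q eps) y (Sp dd))) => //.
    apply: (measurableT_comp (f := fine)); first exact: fine_measurable.
    apply: measurable_kernel; exact: measurableX (hSm dd) mRnn.
  have mg : measurable_fun (Sp b `*` @Rnn R) (fun z => g z.2).
    change (measurable_fun (Sp b `*` @Rnn R) (f \o (fun z => z.2 / tau eps a b))).
    apply: (measurable_comp (F := Rnn)) => //.
      by move=> _ [z [_ hz] <-]; rewrite /Rnn /= divr_ge0 // ltW.
      exact: subspace_continuous_measurable_fun.
    apply: measurable_funTS.
    apply: (measurableT_comp (f := fun t : R => t / tau eps a b) (g := snd)).
      exact: mulrr_measurable.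
    exact: measurable_snd.
  have hg : forall z, (Sp b `*` @Rnn R) z -> `|g z.2| <= C.
    by move=> z [_ hz]; apply: hC; rewrite /Rnn /= divr_ge0 // ltW.
  have hh : forall z, (Sp b `*` @Rnn R) z ->
      `|Pk (Q eps) z.1 (Sp dd) / Pij eps b dd - 1| <= eta.
    by move=> z [hz _]; apply: ltW; apply: (H2 eps ep el2 dd hp).
  have K := @key2 _ _ _ (Q eps x) _ (fun z => Pk (Q eps) z.1 (Sp dd)) (fun z => g z.2) C eta (Pij eps b dd) mA muA m0 mh mg hg (ltW etap) eta12 hp hh.
  have canc : forall k N D : R, k != 0 -> k * N / (k * D) = N / D.
    by move=> k N D k0; rewrite invfM mulrACA mulfV ?mul1r.
  rewrite /ETbar /Pbar /Qbar /ET setIid canc; last first.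
    by rewrite invr_eq0 gt_eqF.
  exact: K.
have F := H1 eps ep el1 (x1, x2) (conj hx1 hx2).
have S1 := side x1 c1 d1 hx1 hP1.
have S2 := side x2 c2 d2 hx2 hP2.
rewrite -/g in F.
rewrite (le_lt_trans (ler_distD (ET (Q eps) x1 (Sp b) g) _ _)) //.
rewrite (le_lt_trans (lerD (lexx _) (ler_distD (ET (Q eps) x2 (Sp b) g) _ _))) //.
rewrite [X in _ + (_ + X)]distrC.
rewrite subr0 in F.
move: F S1 S2 => /=; lra.
Qed.
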